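(* Let $M$ be a partial multiplication matrix whose row-column graph has at least one cycle, and let $\pi^\natural$ be a gridded $M$-coil defined on a cycle of $G_M$ of length $\ell$. Let $\pi^\#$ be any other $M$-gridding of the underlying permutation $\pi$, and let $c_1,\dots,c_r$ be the non-empty cells of $\pi^\#$ that lie in some single row of cells, or in some single column of cells. If cell $c_i$ contains $k_i$ points ($1\le i\le r$) and $S_i=\sum_{j\ne i}k_j$, then $k_i\le 2\ell(S_i+1)$ for each $i$.
   Context: A gridding matrix has entries in $\{0,1,-1\}$; an $m\times n$ one has $m$ columns, $n$ rows, $M_{ij}$ in column $i$ from the left and row $j$ from the bottom. An $M$-gridding of a permutation $\pi$ of length $L$ is a choice of vertical lines $\tfrac12=v_0\le\dots\le v_m=L+\tfrac12$ and horizontal lines $\tfrac12=h_0\le\dots\le h_n=L+\tfrac12$, not through points of $\pi$, such that in each cell $C_{ij}=\{v_{i-1}<x<v_i,\ h_{j-1}<y<h_j\}$ the points of $\pi$ are absent if $M_{ij}=0$, increasing if $M_{ij}=1$, decreasing if $M_{ij}=-1$; this gives an $M$-gridded permutation. The row-column graph $G_M$ is the bipartite graph on $\{1,\dots,m\}\cup\{1',\dots,n'\}$ with edge $ij'$ iff $M_{ij}\neq0$ (so non-zero cells correspond to edges). $M$ is a partial multiplication matrix if there are fixed $c_1,\dots,c_m,r_1,\dots,r_n\in\{\pm1\}$ with $M_{ij}=c_ir_j$ for each non-zero entry. Column $i$ is oriented left-to-right if $c_i=1$, right-to-left otherwise; row $j$ bottom-to-top if $r_j=1$, top-to-bottom otherwise.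 The orientation digraph $D_{\pi^\#}$ of an $M$-gridded permutation has its points as vertices, with $x\to y$ whenever $x,y$ lie in a common column of cells and $x$ precedes $y$ in that column's orientation, or in a common row of cells and $x$ precedes $y$ in that row's orientation. A gridded $M$-coil on a cycle of $G_M$ of length $\ell$ is an $M$-gridded permutation of length $n>\ell$ with an ordering $v_1,\dots,v_n$ of its points and a labelling by $1,\dots,\ell$ of the $\ell$ cells corresponding to the edges of that cycle such that (C1) $v_i$ lies in cell $i\bmod\ell$ (residues in $\{1,\dots,\ell\}$); (C2) $v_{i-1}\to v_i$ for $1<i\le n$; (C3) $v_i\to v_{i-\ell-1}$ for $\ell+1<i\le n$; (C4) $v_{\ell+1}\to v_1$. *)

(* Defs.v *)
(* Conventions (0-based):
   - a permutation pi of length L is a {perm 'I_L}; point x : 'I_L stands for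
     the paper's point (x+1, pi(x)+1).
   - an m x n gridding matrix is M : 'I_m -> 'I_n -> int; M i j is the cell in
     column i (from the left) and row j (from the bottom), 0-based.
   - gridlines are v h : nat -> nat; the paper's line v_k is v k - 1/2, so
     column i consists of x with v i <= x < v i.+1, similarly rows with h. *)
From mathcomp Require Import all_boot all_fingroup all_algebra.
Set Implicit Arguments. Unset Strict Implicit. Unset Printing Implicit Defensive.

Local Open Scope ring_scope.

Definition gridding_matrix (m n : nat) (M : 'I_m -> 'I_n -> int) : Prop :=
  forall i j, M i j = 0 \/ M i j = 1 \/ M i j = -1.

Definition pmm (m n : nat) (M : 'I_m -> 'I_n -> int)
    (c : 'I_m -> int) (r : 'I_n -> int) : Prop :=
  (forall i, c i = 1 \/ c i = -1) /\ (forall j, r j = 1 \/ r j = -1) /\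
  (forall i j, M i j != 0 -> M i j = c i * r j).

(* the cycle a_0 b_0' a_1 b_1' ... a_{p-1} b_{p-1}' a_0 in G_M (p >= 2) *)
Definition is_cycle (m n : nat) (M : 'I_m -> 'I_n -> int) (p : nat)
    (a : 'I_p -> 'I_m) (b : 'I_p -> 'I_n) : Prop :=
  (2 <= p)%N /\ injective a /\ injective b /\
  (forall k, M (a k) (b k) != 0 /\ M (a (ordS k)) (b k) != 0).

Definition cycle_edge (m n p : nat) (a : 'I_p -> 'I_m) (b : 'I_p -> 'I_n)
    (e : 'I_m * 'I_n) : Prop :=
  exists k, e = (a k, b k) \/ e = (a (ordS k), b k).

Definition has_cycle (m n : nat) (M : 'I_m -> 'I_n -> int) : Prop :=
  exists p (a : 'I_p -> 'I_m) (b : 'I_p -> 'I_n), is_cycle M a b.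

Definition in_line (m : nat) (v : nat -> nat) (i : 'I_m) (x : nat) : bool :=
  (v i <= x < v i.+1)%N.

Definition in_cell (m n L : nat) (pi : {perm 'I_L}) (v h : nat -> nat)
    (x : 'I_L) (i : 'I_m) (j : 'I_n) : bool :=
  in_line v i x && in_line h j (pi x).

Definition gridding (m n : nat) (M : 'I_m -> 'I_n -> int) (L : nat)
    (pi : {perm 'I_L}) (v h : nat -> nat) : Prop :=
  v 0%N = 0%N /\ v m = L /\ (forall k, (k < m)%N -> (v k <= v k.+1)%N) /\
  h 0%N = 0%N /\ h n = L /\ (forall k, (k < n)%N -> (h k <= h k.+1)%N) /\
  (forall i j x, in_cell pi v h x i j -> M i j != 0) /\
  (forall i j (x y : 'I_L), in_cell pi v h x i j -> in_cell pi v h y i j ->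
      (x < y)%N ->
      (M i j = 1 -> (pi x < pi y)%N) /\ (M i j = -1 -> (pi y < pi x)%N)).

Definition arrow (m n L : nat) (c : 'I_m -> int) (r : 'I_n -> int)
    (pi : {perm 'I_L}) (v h : nat -> nat) (x y : 'I_L) : Prop :=
  (exists i : 'I_m, in_line v i x /\ in_line v i y /\
      (if c i == 1 then (x < y)%N else (y < x)%N)) \/
  (exists j : 'I_n, in_line h j (pi x) /\ in_line h j (pi y) /\
      (if r j == 1 then (pi x < pi y)%N else (pi y < pi x)%N)).

(* (pi, v, h) is a gridded M-coil on a cycle of G_M of length l.
   The ordering v_1..v_L of the points is s |-> sigma (s-1); the labelling
   of cells by 1..l is t |-> lab (t-1). *)
Definition gridded_coil (m n : nat) (M : 'I_m -> 'I_n -> int)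
    (c : 'I_m -> int) (r : 'I_n -> int) (L : nat) (pi : {perm 'I_L})
    (v h : nat -> nat) (l : nat) : Prop :=
  gridding M pi v h /\ (l < L)%N /\
  exists p (a : 'I_p -> 'I_m) (b : 'I_p -> 'I_n),
    is_cycle M a b /\ l = (2 * p)%N /\
    exists (lab : nat -> 'I_m * 'I_n),
      (forall t1 t2, (t1 < l)%N -> (t2 < l)%N -> lab t1 = lab t2 -> t1 = t2) /\
      (forall t, (t < l)%N -> cycle_edge a b (lab t)) /\
      (forall e, cycle_edge a b e -> exists2 t, (t < l)%N & lab t = e) /\
      exists sigma : {perm 'I_L},
        (forall s : 'I_L, in_cell pi v h (sigma s) (lab (s %% l)%N).1 (lab (s %% l)%N).2) /\
        (forall s t : 'I_L, t = s.+1 :> nat -> arrow c r pi v h (sigma s) (sigma t)) /\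
        (forall s t : 'I_L, s = (t + l.+1)%N :> nat ->
            arrow c r pi v h (sigma s) (sigma t)) /\
        (forall s t : 'I_L, s = l :> nat -> t = 0%N :> nat ->
            arrow c r pi v h (sigma s) (sigma t)).

Definition cell_count (m n L : nat) (pi : {perm 'I_L}) (v h : nat -> nat)
    (i : 'I_m) (j : 'I_n) : nat :=
  #|[set x : 'I_L | in_cell pi v h x i j]|.

(* Main.v *)
Require Import Defs.
From mathcomp Require Import all_boot all_fingroup all_algebra.
From mathcomp Require Import zify.
Set Implicit Arguments. Unset Strict Implicit. Unset Printing Implicit Defensive.

Definition ole (s : int) (x y : nat) : bool := if s == 1%R then (x < y)%N else (y < x)%N.

Lemma ole_trans s x y z : ole s x y -> ole s y z -> ole s x z.
Proof. rewrite /ole; case: (s == 1%R) => /= *; lia. Qed.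

Lemma band_mono (v : nat -> nat) (m : nat) :
  (forall k, (k < m)%N -> (v k <= v k.+1)%N) ->
  forall a b, (a <= b)%N -> (b <= m)%N -> (v a <= v b)%N.
Proof.
move=> Hm a b ab; elim: b ab => [|b IH]; first by rewrite leqn0 => /eqP ->.
rewrite leq_eqVlt => /orP[/eqP -> //|]; rewrite ltnS => ab bm.
apply: leq_trans (IH ab (ltnW bm)) (Hm _ bm).
Qed.

Lemma band_uniq (v : nat -> nat) (m : nat) :
  (forall k, (k < m)%N -> (v k <= v k.+1)%N) ->
  forall (i i' : 'I_m) x, in_line v i x -> in_line v i' x -> i = i'.
Proof.
move=> Hm i i' x; rewrite /in_line => /andP[h1 h2] /andP[h3 h4].
apply/val_inj => /=.
case: (ltngtP i i') => // lt.
- have := band_mono Hm lt (ltnW (ltn_ord i')); lia.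
- have := band_mono Hm lt (ltnW (ltn_ord i)); lia.
Qed.

Lemma band_exists (v : nat -> nat) (m L x : nat) :
  v 0%N = 0%N -> v m = L -> (x < L)%N -> exists i : 'I_m, in_line v i x.
Proof.
move=> h0 hm xL.
suff: forall k, (k <= m)%N -> (x < v k)%N -> exists i : 'I_m, in_line v i x.
  by move=> H; apply: (H m) => //; rewrite hm.
elim=> [|k IH] km; first by rewrite h0.
case: (ltnP x (v k)) => [lt _|ge lt]; first exact: IH (ltnW km) lt.
by exists (Ordinal km); rewrite /in_line /= ge lt.
Qed.

Lemma band_between (v : nat -> nat) (m : nat) (i : 'I_m) a b x :
  in_line v i a -> in_line v i b -> (a <= x <= b)%N -> in_line v i x.
Proof. rewrite /in_line => /andP[? ?] /andP[? ?] /andP[? ?]; apply/andP; lia. Qed.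

Lemma card_bigcup_le (I T : finType) (P : pred I) (F : I -> {set T}) :
  (#|\bigcup_(i | P i) F i| <= \sum_(i | P i) #|F i|)%N.
Proof.
elim/big_rec2: _ => [|i n U _ le]; first by rewrite cards0.
by rewrite (leq_trans (leq_card_setU _ _).1) ?leq_add2l.
Qed.

Lemma cell_rel (m n : nat) (M : 'I_m -> 'I_n -> int) (L : nat) (pi : {perm 'I_L})
  (v h : nat -> nat) (i : 'I_m) (j : 'I_n) (x y : 'I_L) :
  gridding_matrix M -> gridding M pi v h ->
  in_cell pi v h x i j -> in_cell pi v h y i j ->
  ((x < y)%N = if M i j == 1%R then (pi x < pi y)%N else (pi y < pi x)%N) /\ (M i j = 1%R \/ M i j = (-1)%R).
Proof.
move=> Hgm [_ [_ [_ [_ [_ [_ [Hnz Hmon]]]]]]] cx cy.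
have HM : M i j = 1%R \/ M i j = (-1)%R.
  by case: (Hgm i j) (Hnz _ _ _ cx) => [->//|]; auto.
split=> //.
have n1 : ((-1 : int) == 1%R) = false by [].
case: (ltngtP x y) => [lt|gt|eq].
- have [h1 h2] := Hmon _ _ _ _ cx cy lt.
  by case: HM => e; rewrite e ?n1 ?eqxx; [have := h1 e | have := h2 e]; lia.
- have [h1 h2] := Hmon _ _ _ _ cy cx gt.
  by case: HM => e; rewrite e ?n1 ?eqxx; [have := h1 e | have := h2 e]; lia.
- have -> : x = y by apply: val_inj.
  by rewrite !ltnn; case: ifP.
Qed.

Lemma cons_cell (m n : nat) (M : 'I_m -> 'I_n -> int) c r (L : nat) (pi : {perm 'I_L})
  (v h : nat -> nat) (i : 'I_m) (j : 'I_n) (x y : 'I_L) :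
  gridding_matrix M -> gridding M pi v h -> pmm M c r ->
  in_cell pi v h x i j -> in_cell pi v h y i j ->
  ole (c i) x y = ole (r j) (pi x) (pi y).
Proof.
move=> Hgm Hg [Hc [Hr Hcr]] cx cy.
have [e1 HM] := cell_rel Hgm Hg cx cy.
have [e2 _] := cell_rel Hgm Hg cy cx.
have Hnz : M i j != 0%R by case: HM => ->.
have n1 : ((-1 : int) == 1%R) = false by [].
move: (Hcr _ _ Hnz) e1 e2; rewrite /ole => ->.
have n2 : ((1 : int) == (-1)%R) = false by [].
case: (Hc i) => ->; case: (Hr j) => ->; rewrite ?mulrNN ?mulN1r ?mulrN1 ?mul1r ?opprK ?n1 ?n2 ?eqxx /= => E1 E2; first [exact: E1 | exact: E2].
Qed.

Lemma arrow_cell (m n : nat) (M : 'I_m -> 'I_n -> int) c r (L : nat) (pi : {perm 'I_L})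
  (v h : nat -> nat) (i : 'I_m) (j : 'I_n) (x z : 'I_L) :
  gridding_matrix M -> gridding M pi v h -> pmm M c r ->
  in_cell pi v h x i j -> in_cell pi v h z i j ->
  arrow c r pi v h x z -> ole (c i) x z.
Proof.
move=> Hgm Hg Hp cx cz.
have Hg' := Hg; case: Hg' => [_ [_ [Hv [_ [_ [Hh _]]]]]].
move: (cx) (cz); rewrite /in_cell => /andP[cx1 cx2] /andP[cz1 cz2].
case=> [[i' [h1 [h2 h3]]]|[j' [h1 [h2 h3]]]].
- by have e := band_uniq Hv cx1 h1; subst i'; exact: h3.
- have e := band_uniq Hh cx2 h1; subst j'.
  by rewrite (cons_cell Hgm Hg Hp cx cz); exact: h3.
Qed.

Lemma chain (m n : nat) (M : 'I_m -> 'I_n -> int) c r (L : nat) (pi : {perm 'I_L})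
  (v h : nat -> nat) (i i2 : 'I_m) (j j2 : 'I_n) (x y z : 'I_L) :
  gridding M pi v h ->
  in_cell pi v h x i j -> in_cell pi v h z i j -> in_cell pi v h y i2 j2 ->
  (i2, j2) <> (i, j) ->
  arrow c r pi v h x y -> arrow c r pi v h y z ->
  (in_line v i y /\ ~~ in_line h j (pi y) /\ ole (c i) x y /\ ole (c i) y z) \/
  (in_line h j (pi y) /\ ~~ in_line v i y /\ ole (r j) (pi x) (pi y) /\ ole (r j) (pi y) (pi z)).
Proof.
move=> Hg; case: Hg => [_ [_ [Hv [_ [_ [Hh _]]]]]].
rewrite /in_cell => /andP[cx1 cx2] /andP[cz1 cz2] /andP[cy1 cy2] neq.
case=> [[i' [h1 [h2 h3]]]|[j' [h1 [h2 h3]]]];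
case=> [[i'' [g1 [g2 g3]]]|[j'' [g1 [g2 g3]]]].
- have e1 := band_uniq Hv cx1 h1; subst i'.
  have e2 := band_uniq Hv g2 cz1; subst i''.
  have e3 := band_uniq Hv cy1 h2; subst i2.
  left; split=> //; split=> //.
  by apply/negP => hy; apply: neq; rewrite (band_uniq Hh cy2 hy).
- have e1 := band_uniq Hv cx1 h1; subst i'.
  have e3 := band_uniq Hv cy1 h2; subst i2.
  have e2 := band_uniq Hh g2 cz2; subst j''.
  have e4 := band_uniq Hh cy2 g1; subst j2.
  by case: neq.
- have e1 := band_uniq Hh cx2 h1; subst j'.
  have e3 := band_uniq Hh cy2 h2; subst j2.
  have e2 := band_uniq Hv g2 cz1; subst i''.
  have e4 := band_uniq Hv cy1 g1; subst i2.
  by case: neq.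
- have e1 := band_uniq Hh cx2 h1; subst j'.
  have e2 := band_uniq Hh g2 cz2; subst j''.
  have e3 := band_uniq Hh cy2 h2; subst j2.
  right; split=> //; split=> //.
  by apply/negP => hy; apply: neq; rewrite (band_uniq Hv cy1 hy).
Qed.

Lemma edge_type (m n p : nat) (a : 'I_p -> 'I_m) (b : 'I_p -> 'I_n) e :
  cycle_edge a b e -> exists k (t : bool), e = if t then (a k, b k) else (a (ordS k), b k).
Proof. by case=> k [->|->]; exists k; [exists true | exists false]. Qed.

Lemma same_type (m n p : nat) (a : 'I_p -> 'I_m) (b : 'I_p -> 'I_n) k k' (t : bool) :
  injective a -> injective b ->
  let e := (if t then (a k, b k) else (a (ordS k), b k)) in
  let e' := (if t then (a k', b k') else (a (ordS k'), b k')) in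
  (e.1 = e'.1 \/ e.2 = e'.2) -> e = e'.
Proof.
move=> ai bi /=; case: t => /= [[/ai|/bi]|[/ai/ordS_inj|/bi]] -> //.
Qed.

Lemma cycle3 (m n p : nat) (a : 'I_p -> 'I_m) (b : 'I_p -> 'I_n) e1 e2 e3 :
  injective a -> injective b ->
  cycle_edge a b e1 -> cycle_edge a b e2 -> cycle_edge a b e3 ->
  e1 <> e2 -> e2 <> e3 -> e1 <> e3 ->
  ((e1.1 = e2.1 /\ e2.1 = e3.1) \/ (e1.2 = e2.2 /\ e2.2 = e3.2)) -> False.
Proof.
move=> ai bi /edge_type[k1 [t1 E1]] /edge_type[k2 [t2 E2]] /edge_type[k3 [t3 E3]] n12 n23 n13 H.
have H12 : e1.1 = e2.1 \/ e1.2 = e2.2 by case: H => [[]|[]]; auto.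
have H23 : e2.1 = e3.1 \/ e2.2 = e3.2 by case: H => [[]|[]]; auto.
have H13 : e1.1 = e3.1 \/ e1.2 = e3.2 by case: H => [[-> ->]|[-> ->]]; auto.
subst; clear H.
case: t1 t2 t3 n12 n23 n13 H12 H23 H13 => [] [] [] n12 n23 n13 H12 H23 H13;
  first [ exact: n12 (@same_type _ _ _ a b k1 k2 true ai bi H12)
        | exact: n12 (@same_type _ _ _ a b k1 k2 false ai bi H12)
        | exact: n23 (@same_type _ _ _ a b k2 k3 true ai bi H23)
        | exact: n23 (@same_type _ _ _ a b k2 k3 false ai bi H23)
        | exact: n13 (@same_type _ _ _ a b k1 k3 true ai bi H13)
        | exact: n13 (@same_type _ _ _ a b k1 k3 false ai bi H13) ].
Qed.

Lemma mod_neq (x d l : nat) : (0 < d < l)%N -> (x + d) %% l <> x %% l.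
Proof.
move=> /andP[d0 dl] /eqP; rewrite -{2}[x]addn0 eqn_modDl mod0n modn_small //.
by move/eqP=> E; rewrite E in d0.
Qed.

Definition coilH (m n : nat) (M : 'I_m -> 'I_n -> int) (c : 'I_m -> int) (r : 'I_n -> int)
  (L : nat) (pi : {perm 'I_L}) (v h : nat -> nat) (p : nat) (a : 'I_p -> 'I_m)
  (b : 'I_p -> 'I_n) (l : nat) (lab : nat -> 'I_m * 'I_n) (w : nat -> 'I_L) : Prop :=
  gridding_matrix M /\ gridding M pi v h /\ pmm M c r /\ injective a /\ injective b /\
  (3 <= l)%N /\ (l < L)%N /\
  (forall t1 t2, (t1 < l)%N -> (t2 < l)%N -> lab t1 = lab t2 -> t1 = t2) /\
  (forall t, (t < l)%N -> cycle_edge a b (lab t)) /\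
  (forall s, (s < L)%N -> in_cell pi v h (w s) (lab (s %% l)%N).1 (lab (s %% l)%N).2) /\
  (forall s, (s.+1 < L)%N -> arrow c r pi v h (w s) (w s.+1)) /\
  (forall t, (t + l.+1 < L)%N -> arrow c r pi v h (w (t + l.+1)%N) (w t)) /\
  arrow c r pi v h (w l) (w 0%N).

Lemma lab_neq (m n : nat) (l : nat) (lab : nat -> 'I_m * 'I_n) x d :
  (forall t1 t2, (t1 < l)%N -> (t2 < l)%N -> lab t1 = lab t2 -> t1 = t2) ->
  (0 < d < l)%N -> lab ((x + d) %% l)%N <> lab (x %% l)%N.
Proof.
move=> Hi /andP[d0 dl] E.
have l0 : (0 < l)%N by apply: leq_trans dl.
apply: (mod_neq (x := x) (d := d) (l := l)); first by apply/andP.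
move: (ltn_pmod (x + d) l0) (ltn_pmod x l0) => h1 h2.
exact: Hi _ _ h1 h2 E.
Qed.

Lemma pair_neq (A B : Type) (e1 e2 : A * B) : e1 <> e2 -> (e1.1, e1.2) <> (e2.1, e2.2).
Proof. by case: e1; case: e2. Qed.

Lemma step m n M c r L pi v h p a b l lab w :
  @coilH m n M c r L pi v h p a b l lab w ->
  forall s, (s + l < L)%N -> ole (c (lab (s %% l)%N).1) (w (s + l)%N) (w s).
Proof.
case=> Hgm [Hg [Hp [ai [bi [l3 [lL [Hli [Hle [HC1 [HC2 [HC3 HC4]]]]]]]]]]] s.
case: s => [|q] sL.
  rewrite mod0n add0n.
  have c1 := HC1 _ lL; rewrite modnn in c1.
  have c0 := HC1 0%N (leq_ltn_trans (leq0n _) lL); rewrite mod0n in c0.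
  exact: arrow_cell Hgm Hg Hp c1 c0 HC4.
have qL : (q + l.+1 < L)%N by rewrite addnS -addSn.
have a1 := HC3 _ qL; rewrite addnS -addSn in a1.
have a2 := HC2 q (leq_ltn_trans (leq_addr _ _) sL).
have cx := HC1 _ sL; rewrite modnDr in cx.
have cz := HC1 q.+1 (leq_ltn_trans (leq_addr _ _) sL).
have cy := HC1 q (ltn_trans (leq_ltn_trans (leq_addr _ _) sL) (ltnSn _)).
have ne : lab (q %% l)%N <> lab (q.+1 %% l)%N.
  by move=> E; apply: (lab_neq (x := q) (d := 1%N) Hli); rewrite ?addn1 //; apply/andP; split=> //; apply: leq_trans l3.
case: (chain Hg cx cz cy (pair_neq ne) a1 a2) => [[_ [_ [o1 o2]]]|[_ [_ [o1 o2]]]].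
  exact: ole_trans o1 o2.
rewrite (cons_cell Hgm Hg Hp cx cz); exact: ole_trans o1 o2.
Qed.

Lemma iter_step m n M c r L pi v h p a b l lab w :
  @coilH m n M c r L pi v h p a b l lab w ->
  forall k s, (s + k.+1 * l < L)%N ->
  ole (c (lab (s %% l)%N).1) (w (s + k.+1 * l)%N) (w s).
Proof.
move=> H; elim=> [|k IH] s sL.
  by move: sL; rewrite mul1n => sL; exact: (step H sL).
have e : (s + k.+2 * l = (s + k.+1 * l) + l)%N by rewrite mulSn; lia.
rewrite e in sL *.
have o1 := step H sL.
have em : ((s + k.+1 * l) %% l = s %% l)%N by rewrite addnC modnMDl.
rewrite em in o1.
apply: ole_trans o1 (IH _ _); lia.
Qed.

Lemma gap (l s s' : nat) : (0 < l)%N -> (s < s')%N -> (s %% l = s' %% l)%N ->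
  exists k, s' = (s + k.+1 * l)%N.
Proof.
move=> l0 lt em.
have e1 := divn_eq s l; have e2 := divn_eq s' l.
set A := (s %/ l)%N in e1 *; set B := (s' %/ l)%N in e2 *.
have AB : (A < B)%N.
  rewrite ltnNge; apply/negP => BA.
  have := leq_mul BA (leqnn l); lia.
exists (B - A).-1; rewrite prednK ?subn_gt0 // mulnBl.
have := leq_mul (ltnW AB) (leqnn l); lia.
Qed.

Lemma ord_gen m n M c r L pi v h p a b l lab w :
  @coilH m n M c r L pi v h p a b l lab w ->
  forall s s', (s < s')%N -> (s' < L)%N -> (s %% l = s' %% l)%N ->
  ole (c (lab (s %% l)%N).1) (w s') (w s).
Proof.
move=> H s s' lt sL em.
have l0 : (0 < l)%N by case: H => _ [_ [_ [_ [_ [l3 _]]]]]; apply: leq_trans l3.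
have [k ek] := gap l0 lt em.
rewrite ek in sL *; exact: iter_step H k s sL.
Qed.

Lemma core m n M c r L pi v h p a b l lab w :
  @coilH m n M c r L pi v h p a b l lab w ->
  forall s1 s2 s3, (s1 < s2)%N -> (s2 < s3)%N -> (s3 < L)%N ->
  (s1 %% l = s2 %% l)%N -> (s3 %% l = s2 %% l)%N ->
  (exists y : 'I_L, in_line v (lab (s2 %% l)%N).1 y /\ ~~ in_line h (lab (s2 %% l)%N).2 (pi y) /\
     ole (c (lab (s2 %% l)%N).1) (w s3) y /\ ole (c (lab (s2 %% l)%N).1) y (w s1)) /\
  (exists y : 'I_L, in_line h (lab (s2 %% l)%N).2 (pi y) /\ ~~ in_line v (lab (s2 %% l)%N).1 y /\
     ole (r (lab (s2 %% l)%N).2) (pi (w s3)) (pi y) /\ ole (r (lab (s2 %% l)%N).2) (pi y) (pi (w s1))).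
Proof.
move=> H s1 s2 s3 lt12 lt23 s3L e12 e32.
have H' := H.
case: H' => Hgm [Hg [Hp [ai [bi [l3 [lL [Hli [Hle [HC1 [HC2 [HC3 HC4]]]]]]]]]]].
have Hg' := Hg; case: Hg' => [_ [_ [Hv [_ [_ [Hh _]]]]]].
have l0 : (0 < l)%N by apply: leq_trans l3.
have [k1 ek1] := gap l0 lt12 e12.
have [k2 ek2] := gap l0 lt23 (esym e32).
have [t0 [et0 t0r]] : exists t0, (t0 + l = s2)%N /\ (t0 %% l = s2 %% l)%N.
  exists (s1 + k1 * l)%N; split; first by rewrite ek1 mulSn; lia.
  by rewrite -e12 addnC modnMDl.
have s2l : (s2 + l <= s3)%N by rewrite ek2 mulSn; lia.
have s2lr : ((s2 + l) %% l = s2 %% l)%N by rewrite modnDr.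
have t0s1 : (s1 <= t0)%N.
  have : (s1 + l <= s2)%N by rewrite ek1 mulSn; lia.
  by clear -et0; lia.
clear ek1 ek2 k1 k2.
have [q eq] : exists q, s2 = q.+1 by exists s2.-1; rewrite prednK //; clear -lt12; lia.
have B1 : (s2.+1 < L)%N by clear -lt23 s3L; lia.
have B2 : (s2 + l < L)%N by clear -s2l s3L; lia.
have B3 : (s2 < L)%N by clear -lt23 s3L; lia.
have B4 : (s1 < L)%N by clear -lt12 lt23 s3L; lia.
have B5 : (t0 < L)%N by clear -et0 B3; lia.
have B6 : (q < L)%N by clear -eq B3; lia.
have B7 : (t0 + l.+1 < L)%N by clear -et0 B1; lia.
have B8 : (q + l.+1 < L)%N by clear -eq B2; lia.
set X := lab (s2 %% l)%N.
set ci := X.1. set rj := X.2.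
have cellX : forall s, (s < L)%N -> (s %% l = s2 %% l)%N -> in_cell pi v h (w s) ci rj.
  by move=> s sL es; have := HC1 s sL; rewrite es.
have c2 := cellX s2 B3 erefl.
have c1 := cellX s1 B4 e12.
have c3 := cellX s3 s3L e32.
have ct0 := cellX t0 B5 t0r.
have cl := cellX (s2 + l)%N B2 s2lr.
have conv : forall x z, in_cell pi v h x ci rj -> in_cell pi v h z ci rj ->
    ole (r rj) (pi x) (pi z) = ole (c ci) x z.
  by move=> x z cx cz; rewrite (cons_cell Hgm Hg Hp cx cz).
have O1 : ole (c ci) (w s3) (w s2).
  have HH := ord_gen H lt23 s3L (esym e32); exact HH.
have O4 : ole (c ci) (w s2) (w s1).
  have HH := ord_gen H lt12 B3 e12; rewrite e12 in HH; exact HH.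
have O2 : forall y, ole (c ci) y (w t0) -> ole (c ci) y (w s1).
  move=> y oy; case: (ltngtP s1 t0) => [lt|gt|eq1]; last by rewrite eq1.
    apply: ole_trans oy _.
    have HH := ord_gen H lt B5 ltac:(by rewrite t0r e12); rewrite e12 in HH; exact HH.
  by move: gt; rewrite ltnNge t0s1.
have O3 : forall y, ole (c ci) (w (s2 + l)) y -> ole (c ci) (w s3) y.
  move=> y oy; case: (ltngtP (s2 + l) s3) => [lt|gt|eq1]; last by rewrite -eq1.
    apply: ole_trans _ oy.
    have HH := ord_gen H lt s3L ltac:(by rewrite s2lr e32); rewrite s2lr in HH; exact HH.
  by move: gt; rewrite ltnNge s2l.
have a1 := HC2 s2 B1.
have a2 := HC3 t0 B7; rewrite addnS et0 in a2.
have cya := HC1 s2.+1 B1.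
have neq_a : lab (s2.+1 %% l)%N <> X.
  rewrite /X -addn1; apply: lab_neq Hli _; apply/andP; split=> //; clear -l3; lia.
have b1 := HC3 q B8.
have eb : (q + l.+1 = s2 + l)%N by rewrite eq addnS addSn.
rewrite eb in b1.
have b2 := HC2 q ltac:(by rewrite -eq).
rewrite -eq in b2.
have cyb := HC1 q B6.
have neq_b : lab (q %% l)%N <> X.
  rewrite /X eq -addn1 => E; apply: (lab_neq (x := q) (d := 1%N) Hli); last by rewrite E.
  apply/andP; split=> //; clear -l3; lia.
have neq_ab : lab (q %% l)%N <> lab (s2.+1 %% l)%N.
  move=> E; apply: (lab_neq (x := q) (d := 2%N) Hli); last by rewrite E eq addn2.
  apply/andP; split=> //; clear -l3; lia.
have cyc := fun (H1 : _ \/ _) => cycle3 ai bi (Hle _ (ltn_pmod q l0)) (Hle _ (ltn_pmod s2 l0))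
        (Hle _ (ltn_pmod s2.+1 l0)) neq_b (fun E => neq_a (esym E)) neq_ab H1.
have O1r : ole (r rj) (pi (w s3)) (pi (w s2)) by rewrite conv.
have O4r : ole (r rj) (pi (w s2)) (pi (w s1)) by rewrite conv.
have O2r : forall y : 'I_L, ole (r rj) (pi y) (pi (w t0)) -> ole (r rj) (pi y) (pi (w s1)).
  move=> y oy; case: (ltngtP s1 t0) => [lt|gt|eq1]; last by rewrite eq1.
    apply: ole_trans oy _.
    have HH := ord_gen H lt B5 ltac:(by rewrite t0r e12); rewrite e12 -(conv _ _ ct0 c1) in HH; exact HH.
  by move: gt; rewrite ltnNge t0s1.
have O3r : forall y : 'I_L, ole (r rj) (pi (w (s2 + l))) (pi y) -> ole (r rj) (pi (w s3)) (pi y).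
  move=> y oy; case: (ltngtP (s2 + l) s3) => [lt|gt|eq1]; last by rewrite -eq1.
    apply: ole_trans _ oy.
    have HH := ord_gen H lt s3L ltac:(by rewrite s2lr e32); rewrite s2lr -(conv _ _ c3 cl) in HH; exact HH.
  by move: gt; rewrite ltnNge s2l.
move: (cya) (cyb); rewrite /in_cell => /andP[cya1 cya2] /andP[cyb1 cyb2].
have [[ia [na [oa1 oa2]]]|[ia [na [oa1 oa2]]]] := chain Hg c2 ct0 cya (pair_neq neq_a) a1 a2;
have [[ib [nb [ob1 ob2]]]|[ib [nb [ob1 ob2]]]] := chain Hg cl c2 cyb (pair_neq neq_b) b1 b2.
- exfalso; apply: cyc; left; split.
    have HH := band_uniq Hv cyb1 ib; exact HH.
  have HH := band_uniq Hv cya1 ia; exact (esym HH).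
- split.
    exists (w s2.+1); split=> //; split=> //; split; [exact: ole_trans O1 oa1 | exact: O2 oa2].
  exists (w q); split=> //; split=> //; split; [exact: O3r ob1 | exact: ole_trans ob2 O4r].
- split.
    exists (w q); split=> //; split=> //; split; [exact: O3 ob1 | exact: ole_trans ob2 O4].
  exists (w s2.+1); split=> //; split=> //; split; [exact: ole_trans O1r oa1 | exact: O2r oa2].
- exfalso; apply: cyc; right; split.
    have HH := band_uniq Hh cyb2 ib; exact HH.
  have HH := band_uniq Hh cya2 ia; exact (esym HH).
Qed.

Lemma fiber_count (T : finType) (g : T -> nat) K : forall (A : {set T}),
  (forall x, x \in A -> (g x < K)%N) ->
  (forall k, (#|[set x in A | g x == k]| <= 2)%N) -> (#|A| <= 2 * K)%N.
Proof.
elim: K => [|K IH] A HA Hf.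
  suff -> : A = set0 by rewrite cards0.
  by apply/setP => x; rewrite inE; apply/negP => /HA.
rewrite -(cardsID [set x | g x == K] A).
have e : A :&: [set x | g x == K] = [set x in A | g x == K].
  by apply/setP => x; rewrite !inE.
rewrite e mulnS; apply: leq_add (Hf K) _.
apply: IH => [x|k].
  rewrite !inE => /andP[/negP nx xa]; have := HA x xa.
  by rewrite ltnS leq_eqVlt => /orP[/eqP E|//]; case: nx; rewrite E.
apply: leq_trans (Hf k); apply: subset_leq_card; apply/subsetP => x.
by rewrite !inE => /andP[/andP[_ xa] ->]; rewrite xa.
Qed.

Lemma GC (T : finType) (Q O : {set T}) (key res : T -> nat) (l : nat) :
  (forall x, (res x < l)%N) ->
  (forall q1 q3 y, q1 \in Q -> q3 \in Q -> (key q1 < key y < key q3)%N -> y \in Q \/ y \in O) ->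
  (forall q1 q2 q3, q1 \in Q -> q2 \in Q -> q3 \in Q -> q1 != q2 -> q2 != q3 -> q3 != q1 ->
     res q1 = res q2 -> res q2 = res q3 ->
     exists x z y, [/\ x \in [:: q1; q2; q3], z \in [:: q1; q2; q3], y \notin Q &
                       (key x < key y < key z)%N]) ->
  (#|Q| <= 2 * l * (#|O| + 1))%N.
Proof.
move=> Hres Hband Hcoil.
pose f q := #|[set o in O | (key o < key q)%N]|.
have fO : forall q, (f q <= #|O|)%N.
  move=> q; apply: subset_leq_card; apply/subsetP => x; rewrite inE; by case/andP.
pose g q := (f q * l + res q)%N.
have gi : forall q, f q = (g q %/ l)%N /\ res q = (g q %% l)%N.
  move=> q; have l0 : (0 < l)%N by apply: leq_ltn_trans (Hres q).
  by rewrite /g divnMDl // modnMDl divn_small ?modn_small ?addn0.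
have -> : (2 * l * (#|O| + 1) = 2 * ((#|O| + 1) * l))%N by rewrite -mulnA [(l * _)%N]mulnC.
apply: (fiber_count (g := g)) => [x _|k].
  rewrite /g mulnDl mul1n; have := leq_mul (fO x) (leqnn l); have := Hres x.
  by clear; move: (f x * l)%N => A; move: (#|O| * l)%N => B; lia.
rewrite leqNgt; apply/negP => /card_gt2P [x [y [z [[xi yi zi] [nxy nyz nzx]]]]].
move: xi yi zi; rewrite !inE => /andP[xQ /eqP gx] /andP[yQ /eqP gy] /andP[zQ /eqP gz].
have [fx rx] := gi x; have [fy ry] := gi y; have [fz rz] := gi z.
have [x' [z' [y' [xl zl yQ' kk]]]] := Hcoil x y z xQ yQ zQ nxy nyz nzx
  ltac:(by rewrite rx ry gx gy) ltac:(by rewrite ry rz gy gz).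
have fall : forall u, u \in [:: x; y; z] -> f u = (k %/ l)%N.
  by move=> u; rewrite !inE => /or3P[/eqP->|/eqP->|/eqP->]; rewrite ?fx ?fy ?fz ?gx ?gy ?gz.
have x'Q : x' \in Q by move: xl; rewrite !inE => /or3P[/eqP->|/eqP->|/eqP->].
have z'Q : z' \in Q by move: zl; rewrite !inE => /or3P[/eqP->|/eqP->|/eqP->].
have y'O : y' \in O by case: (Hband x' z' y' x'Q z'Q kk) => //; rewrite (negbTE yQ').
have : (f x' < f z')%N.
  apply: proper_card; apply/properP; split.
    apply/subsetP => o; rewrite !inE => /andP[-> ko] /=; move/andP: kk => [k1 k2].
    by clear -ko k1 k2; lia.
  move/andP: kk => [k1 k2].
  exists y'; rewrite !inE y'O //=.
  by rewrite -leqNgt ltnW.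
by rewrite (fall _ xl) (fall _ zl) ltnn.
Qed.


Lemma band_between2 (v : nat -> nat) (m : nat) (i : 'I_m) a b x :
  in_line v i a -> in_line v i b -> (a < x < b)%N || (b < x < a)%N -> in_line v i x.
Proof.
move=> ha hb /orP[] /andP[h1 h2].
  by apply: band_between ha hb _; rewrite (ltnW h1) (ltnW h2).
by apply: band_between hb ha _; rewrite (ltnW h1) (ltnW h2).
Qed.

Lemma mono3 (m n : nat) (M : 'I_m -> 'I_n -> int) (L : nat) (pi : {perm 'I_L})
  (v h : nat -> nat) (i : 'I_m) (j : 'I_n) (x y z : 'I_L) :
  gridding_matrix M -> gridding M pi v h ->
  in_cell pi v h x i j -> in_cell pi v h y i j -> in_cell pi v h z i j ->
  ((x < y < z)%N -> (pi x < pi y < pi z)%N || (pi z < pi y < pi x)%N) /\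
  ((pi x < pi y < pi z)%N -> (x < y < z)%N || (z < y < x)%N).
Proof.
move=> Hgm Hg cx cy cz.
have [e1 HM] := cell_rel Hgm Hg cx cy.
have [e2 _] := cell_rel Hgm Hg cy cz.
have [e3 _] := cell_rel Hgm Hg cy cx.
have [e4 _] := cell_rel Hgm Hg cz cy.
have n1 : ((-1 : int) == 1%R) = false by [].
case: HM => E; rewrite E ?eqxx ?n1 in e1 e2 e3 e4; split.
- by rewrite e1 e2 => ->.
- by rewrite -e1 -e2 => ->.
- by rewrite e1 e2 => /andP[-> ->]; rewrite orbT.
- rewrite -e3 -e4 => /andP[h1 h2]; apply/orP; right; apply/andP; split; [exact: h2 | exact: h1].
Qed.

Lemma sort3 (T : eqType) (q1 q2 q3 : T) (idx : T -> nat) (G : Prop) :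
  idx q1 != idx q2 -> idx q2 != idx q3 -> idx q3 != idx q1 ->
  (forall u1 u2 u3, u1 \in [:: q1; q2; q3] -> u2 \in [:: q1; q2; q3] -> u3 \in [:: q1; q2; q3] ->
     (idx u1 < idx u2)%N -> (idx u2 < idx u3)%N -> G) -> G.
Proof.
move=> n12 n23 n31 K.
have m1 : q1 \in [:: q1; q2; q3] by rewrite !inE eqxx.
have m2 : q2 \in [:: q1; q2; q3] by rewrite !inE eqxx orbT.
have m3 : q3 \in [:: q1; q2; q3] by rewrite !inE eqxx !orbT.
case: (ltngtP (idx q1) (idx q2)) => [a|a|e]; last by rewrite e eqxx in n12.
all: case: (ltngtP (idx q2) (idx q3)) => [b|b|e]; last by rewrite e eqxx in n23.
all: case: (ltngtP (idx q3) (idx q1)) => [d|d|e]; last by rewrite e eqxx in n31.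
all: first [ exact: K m1 m2 m3 a b | exact: K m1 m3 m2 ltac:(lia) ltac:(lia)
           | exact: K m2 m1 m3 ltac:(lia) ltac:(lia) | exact: K m2 m3 m1 ltac:(lia) ltac:(lia)
           | exact: K m3 m1 m2 ltac:(lia) ltac:(lia) | exact: K m3 m2 m1 ltac:(lia) ltac:(lia)
           | exfalso; lia ].
Qed.

Lemma aux_col m n M c r L pi v h p a b l lab w (v' h' : nat -> nat) (i : 'I_m) (j : 'I_n)
  (s1 s2 s3 : nat) :
  @coilH m n M c r L pi v h p a b l lab w -> gridding M pi v' h' ->
  (s1 < s2)%N -> (s2 < s3)%N -> (s3 < L)%N ->
  (s1 %% l = s2 %% l)%N -> (s3 %% l = s2 %% l)%N ->
  in_cell pi v' h' (w s1) i j -> in_cell pi v' h' (w s3) i j ->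
  exists x z y : 'I_L, [/\ (x == w s1) || (x == w s3), (z == w s1) || (z == w s3),
     ~~ in_cell pi v' h' y i j & (x < y < z)%N].
Proof.
move=> H Hg' lt12 lt23 s3L e12 e32 q1 q3.
have [[y [iy [ny [o1 o2]]]] _] := core H lt12 lt23 s3L e12 e32.
have H' := H; case: H' => Hgm [Hg [Hp [ai [bi [l3 [lL [Hli [Hle [HC1 _]]]]]]]]].
have c1 := HC1 s1 ltac:(clear -lt12 lt23 s3L; lia); rewrite e12 in c1.
have c3 := HC1 s3 s3L; rewrite e32 in c3.
move: c1 c3; rewrite /in_cell => /andP[_ r1] /andP[_ r3].
move: o1 o2; rewrite /ole; case: ifP => _ o1 o2.
- exists (w s3), (w s1), y; split; rewrite ?eqxx ?orbT //; last by rewrite o1 o2.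
  apply/negP => yQ; have [K _] := mono3 Hgm Hg' q3 yQ q1.
  move: (K ltac:(by rewrite o1 o2)) => /(band_between2 r3 r1) hy.
  by rewrite hy in ny.
- exists (w s1), (w s3), y; split; rewrite ?eqxx ?orbT //; last by rewrite o1 o2.
  apply/negP => yQ; have [K _] := mono3 Hgm Hg' q1 yQ q3.
  move: (K ltac:(by rewrite o1 o2)) => /(band_between2 r1 r3) hy.
  by rewrite hy in ny.
Qed.

Lemma aux_row m n M c r L pi v h p a b l lab w (v' h' : nat -> nat) (i : 'I_m) (j : 'I_n)
  (s1 s2 s3 : nat) :
  @coilH m n M c r L pi v h p a b l lab w -> gridding M pi v' h' ->
  (s1 < s2)%N -> (s2 < s3)%N -> (s3 < L)%N ->
  (s1 %% l = s2 %% l)%N -> (s3 %% l = s2 %% l)%N ->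
  in_cell pi v' h' (w s1) i j -> in_cell pi v' h' (w s3) i j ->
  exists x z y : 'I_L, [/\ (x == w s1) || (x == w s3), (z == w s1) || (z == w s3),
     ~~ in_cell pi v' h' y i j & (pi x < pi y < pi z)%N].
Proof.
move=> H Hg' lt12 lt23 s3L e12 e32 q1 q3.
have [_ [y [iy [ny [o1 o2]]]]] := core H lt12 lt23 s3L e12 e32.
have H' := H; case: H' => Hgm [Hg [Hp [ai [bi [l3 [lL [Hli [Hle [HC1 _]]]]]]]]].
have c1 := HC1 s1 ltac:(clear -lt12 lt23 s3L; lia); rewrite e12 in c1.
have c3 := HC1 s3 s3L; rewrite e32 in c3.
move: c1 c3; rewrite /in_cell => /andP[r1 _] /andP[r3 _].
move: o1 o2; rewrite /ole; case: ifP => _ o1 o2.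
- exists (w s3), (w s1), y; split; rewrite ?eqxx ?orbT //; last by rewrite o1 o2.
  apply/negP => yQ; have [_ K] := mono3 Hgm Hg' q3 yQ q1.
  move: (K ltac:(by rewrite o1 o2)) => /(band_between2 r3 r1) hy.
  by rewrite hy in ny.
- exists (w s1), (w s3), y; split; rewrite ?eqxx ?orbT //; last by rewrite o1 o2.
  apply/negP => yQ; have [_ K] := mono3 Hgm Hg' q1 yQ q3.
  move: (K ltac:(by rewrite o1 o2)) => /(band_between2 r1 r3) hy.
  by rewrite hy in ny.
Qed.

Theorem proposition5p5 (m n : nat) (M : 'I_m -> 'I_n -> int)
    (c : 'I_m -> int) (r : 'I_n -> int) (L : nat) (pi : {perm 'I_L})
    (v h : nat -> nat) (l : nat) (v' h' : nat -> nat) :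
  gridding_matrix M -> pmm M c r -> has_cycle M ->
  gridded_coil M c r pi v h l ->
  gridding M pi v' h' ->
  (forall (i : 'I_m) (j : 'I_n), (0 < cell_count pi v' h' i j)%N ->
     (cell_count pi v' h' i j <=
        2 * l * ((\sum_(i' : 'I_m | i' != i) cell_count pi v' h' i' j) + 1))%N) /\
  (forall (i : 'I_m) (j : 'I_n), (0 < cell_count pi v' h' i j)%N ->
     (cell_count pi v' h' i j <=
        2 * l * ((\sum_(j' : 'I_n | j' != j) cell_count pi v' h' i j') + 1))%N).
Proof.
move=> Hgm Hp _ [Hg [lL [p [a [b [[p2 [ai [bi _]]] [Hl [lab [Hli [Hle [_ [sigma [C1 [C2 [C3 C4]]]]]]]]]]]]]]] Hg'.
pose x0 : 'I_L := Ordinal lL.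
pose w s := sigma (insubd x0 s).
have vw : forall s, (s < L)%N -> val (insubd x0 s) = s by move=> s sL; rewrite val_insubd sL.
have l3 : (3 <= l)%N by rewrite Hl; clear -p2; lia.
have l0 : (0 < l)%N by clear -l3; lia.
have H : coilH M c r pi v h a b l lab w.
  do 8 (split; first by []).
  split; first by [].
  split; first by move=> s sL; have := C1 (insubd x0 s); rewrite vw.
  split; first by move=> s sL; apply: C2; rewrite !vw //; clear -sL; lia.
  split; first by move=> t tL; apply: C3; rewrite !vw //; clear -tL; lia.
  by apply: C4; rewrite !vw //; clear -lL; lia.
pose idx (q : 'I_L) := val (sigma^-1 q)%g.
have widx : forall q, w (idx q) = q by move=> q; rewrite /w /idx valKd permKV.
have idxi : forall q1 q2, q1 != q2 -> idx q1 != idx q2.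
  move=> q1 q2; apply: contra => /eqP E; apply/eqP; by rewrite -(widx q1) -(widx q2) E.
have Hg'' := Hg'; case: Hg'' => [hv0 [hvm [Hv' [hh0 [hhm [Hh' _]]]]]].
have resl : forall u, u \in [:: w 0%N; w 0%N; w 0%N] -> True by [].
split=> i j _; rewrite /cell_count.
- set Q := [set x | in_cell pi v' h' x i j].
  set O := [set x : 'I_L | in_line h' j (pi x) && ~~ in_line v' i x].
  apply: leq_trans (GC (Q := Q) (O := O) (key := fun x : 'I_L => nat_of_ord (pi x)) (res := fun x => (idx x %% l)%N) (l := l) _ _ _) _.
  + by move=> x; exact: ltn_pmod.
  + move=> q1 q3 y; rewrite /Q !inE /in_cell => /andP[_ r1] /andP[_ r3] /andP[k1 k2].
    have ry : in_line h' j (pi y) by apply: band_between r1 r3 _; rewrite (ltnW k1) (ltnW k2).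
    by case E: (in_line v' i y); [left | right]; rewrite ry.
  + move=> q1 q2 q3 Q1 Q2 Q3 n12 n23 n31 r12 r23.
    have rl : forall u, u \in [:: q1; q2; q3] -> (idx u %% l = idx q2 %% l)%N.
      by move=> u; rewrite !inE => /or3P[/eqP->|/eqP->|/eqP->].
    apply: (sort3 (idx := idx) (idxi _ _ n12) (idxi _ _ n23) (idxi _ _ n31)) => u1 u2 u3 m1 m2 m3 a12 a23.
    have inQ : forall u, u \in [:: q1; q2; q3] -> in_cell pi v' h' u i j.
      by move=> u; rewrite !inE => /or3P[/eqP->|/eqP->|/eqP->]; rewrite -(in_set (fun x => in_cell pi v' h' x i j)).
    have := aux_row (i := i) (j := j) H Hg' a12 a23 (ltn_ord _)
      ltac:(by rewrite (rl _ m1) (rl _ m2)) ltac:(by rewrite (rl _ m3) (rl _ m2)).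
    rewrite !widx => /(_ (inQ _ m1) (inQ _ m3)) [x [z [y [hx hz hy hk]]]].
    exists x, z, y; split=> //.
    * by case/orP: hx => /eqP ->.
    * by case/orP: hz => /eqP ->.
    * by rewrite /Q inE.
  + rewrite leq_mul2l leq_add2r; apply/orP; right.
    apply: leq_trans (card_bigcup_le _ _).
    apply: subset_leq_card; apply/subsetP => x; rewrite inE => /andP[rx nx].
    have [i' ci'] := band_exists hv0 hvm (ltn_ord x).
    apply/bigcupP; exists i'.
      by apply: contraNneq nx => <-.
    by rewrite inE /in_cell ci' rx.
- set Q := [set x | in_cell pi v' h' x i j].
  set O := [set x : 'I_L | in_line v' i x && ~~ in_line h' j (pi x)].
  apply: leq_trans (GC (Q := Q) (O := O) (key := fun x : 'I_L => nat_of_ord x) (res := fun x => (idx x %% l)%N) (l := l) _ _ _) _.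
  + by move=> x; exact: ltn_pmod.
  + move=> q1 q3 y; rewrite /Q !inE /in_cell => /andP[r1 _] /andP[r3 _] /andP[k1 k2].
    have ry : in_line v' i y by apply: band_between r1 r3 _; rewrite (ltnW k1) (ltnW k2).
    by case E: (in_line h' j (pi y)); [left | right]; rewrite ry.
  + move=> q1 q2 q3 Q1 Q2 Q3 n12 n23 n31 r12 r23.
    have rl : forall u, u \in [:: q1; q2; q3] -> (idx u %% l = idx q2 %% l)%N.
      by move=> u; rewrite !inE => /or3P[/eqP->|/eqP->|/eqP->].
    apply: (sort3 (idx := idx) (idxi _ _ n12) (idxi _ _ n23) (idxi _ _ n31)) => u1 u2 u3 m1 m2 m3 a12 a23.
    have inQ : forall u, u \in [:: q1; q2; q3] -> in_cell pi v' h' u i j.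
      by move=> u; rewrite !inE => /or3P[/eqP->|/eqP->|/eqP->]; rewrite -(in_set (fun x => in_cell pi v' h' x i j)).
    have := aux_col (i := i) (j := j) H Hg' a12 a23 (ltn_ord _)
      ltac:(by rewrite (rl _ m1) (rl _ m2)) ltac:(by rewrite (rl _ m3) (rl _ m2)).
    rewrite !widx => /(_ (inQ _ m1) (inQ _ m3)) [x [z [y [hx hz hy hk]]]].
    exists x, z, y; split=> //.
    * by case/orP: hx => /eqP ->.
    * by case/orP: hz => /eqP ->.
    * by rewrite /Q inE.
  + rewrite leq_mul2l leq_add2r; apply/orP; right.
    apply: leq_trans (card_bigcup_le _ _).
    apply: subset_leq_card; apply/subsetP => x; rewrite inE => /andP[rx nx].
    have [j' cj'] := band_exists hh0 hhm (ltn_ord (pi x)).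
    apply/bigcupP; exists j'.
      by apply: contraNneq nx => <-.
    by rewrite inE /in_cell cj' rx.
Qed.
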